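(* Let $b\ge1$ and $1\le a\le b$ be integers, and put $s=\tfrac{2a-1}{2}$. Let $V:\mathbb{C}^2\to\mathcal{H}_j$ be the encoding isometry of a spin code that is $(\mathsf{BD}_{2b},\delta_a)$-covariant, i.e. $D^j(g)V=V\delta_a(g)$ for all $g\in\mathsf{BD}_{2b}$, and let $|\bar0\rangle=V|0\rangle$, $|\bar1\rangle=V|1\rangle$. Then $\operatorname{supp}|\bar0\rangle\subset s+2b\mathbb{Z}$ and $\operatorname{supp}|\bar1\rangle=-\operatorname{supp}|\bar0\rangle$.
   Context: $\mathcal{H}_j$ is the spin-$j$ irrep of $\mathrm{SU}(2)$ with $J_z$-eigenbasis $|j,m\rangle$, $|m|\le j$, and $D^j(g)$ the action of $g$; in particular $D^j(\mathsf{Ph}(\alpha))|j,m\rangle=e^{-i\alpha m}|j,m\rangle$ and $D^j(\mathsf{X})|j,m\rangle=e^{-i\pi j}|j,-m\rangle$. For $|\psi\rangle=\sum_m\alpha_m|j,m\rangle$, $\operatorname{supp}|\psi\rangle=\{m:\alpha_m\ne0\}$. Here $\mathsf{X}=\begin{pmatrix}0&-i\\-i&0\end{pmatrix}$, $\mathsf{Z}=\begin{pmatrix}-i&0\\0&i\end{pmatrix}$, $\mathsf{Ph}(\alpha)=\mathrm{diag}(e^{-i\alpha/2},e^{i\alpha/2})$, and $\mathsf{BD}_{2b}=\langle\mathsf{X},\mathsf{Z},\mathsf{Ph}(\pi/b)\rangle$ (binary dihedral group of order $8b$). For $1\le a\le b$, $\delta_a$ is the two-dimensional irreducible representation of $\mathsf{BD}_{2b}$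 with $\delta_a(\mathsf{X})=\mathsf{X}$ and $\delta_a(\mathsf{Ph}(\pi/b))=\mathsf{Ph}(\pi/b)^{2a-1}$. *)

(* Defs.v *)
From mathcomp Require Import all_boot all_order all_algebra algC.
Set Implicit Arguments. Unset Strict Implicit. Unset Printing Implicit Defensive.
Import Order.TTheory GRing.Theory Num.Theory.
Local Open Scope ring_scope.

(* Spin j = n/2.  H_j = C^(n+1) with basis index k : 'I_(n+1), where basis
   vector k is |j, m> with m = j - k = (n - 2k)/2. *)
Definition mval (n : nat) (k : 'I_n.+1) : rat := (n%:Q - 2 * k%:Q) / 2.

(* D^j(g) for an arbitrary 2x2 matrix g, realized on Sym^(2j)(C^2):
   |j,m> = e1^(j+m) e2^(j-m) / sqrt((j+m)! (j-m)!), g e1 = g00 e1 + g10 e2,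
   g e2 = g01 e1 + g11 e2.  Entry (k', k) = <j,m_k'| D^j(g) |j,m_k>. *)
Definition Dj (n : nat) (g : 'M[algC]_2) : 'M[algC]_n.+1 :=
  \matrix_(k' < n.+1, k < n.+1)
    (sqrtC (((n - k')`! * k'`!)%N%:R) / sqrtC (((n - k)`! * k`!)%N%:R) *
     \sum_(u < (n - k).+1) \sum_(l < k.+1)
        (if (u + l == n - k')%N then
           'C(n - k, u)%:R * g 0 0 ^+ u * g 1 0 ^+ (n - k - u) *
           ('C(k, l)%:R * g 0 1 ^+ l * g 1 1 ^+ (k - l))
         else 0)).

Definition Xmx : 'M[algC]_2 := \matrix_(i < 2, j < 2) (if i == j then 0 else - 'i).
Definition Zmx : 'M[algC]_2 := \matrix_(i < 2, j < 2)
  (if i == j then (if i == 0 then - 'i else 'i) else 0).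
(* zeta = exp(i pi / (2b)), the principal (2b)-th root of -1 *)
Definition zeta (b : nat) : algC := (2 * b)%N.-root (-1).
Definition Phmx (b : nat) : 'M[algC]_2 := \matrix_(i < 2, j < 2)
  (if i == j then (if i == 0 then (zeta b)^-1 else zeta b) else 0).

Inductive gen := GX | GZ | GPh.

Definition genmx (b : nat) (x : gen) : 'M[algC]_2 :=
  match x with GX => Xmx | GZ => Zmx | GPh => Phmx b end.

(* Every element of BD_{2b} = <X, Z, Ph(pi/b)> (a finite group) is the product
   of a word in the generators. *)
Definition evalw (b : nat) (w : seq gen) : 'M[algC]_2 :=
  foldr (fun x M => genmx b x *m M) 1%:M w.

(* delta_a on generators: X |-> X, Ph(pi/b) |-> Ph(pi/b)^(2a-1), and hence
   Z = Ph(pi/b)^b |-> Ph(pi/b)^(b(2a-1)). *)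
Definition delta_gen (a b : nat) (x : gen) : 'M[algC]_2 :=
  match x with
  | GX => Xmx
  | GZ => Phmx b ^+ (b * (2 * a - 1))
  | GPh => Phmx b ^+ (2 * a - 1)
  end.

Definition delta_w (a b : nat) (w : seq gen) : 'M[algC]_2 :=
  foldr (fun x M => delta_gen a b x *m M) 1%:M w.

Definition supp (n : nat) (v : 'I_n.+1 -> algC) : rat -> Prop :=
  fun m => exists k : 'I_n.+1, v k != 0 /\ mval k = m.

(* Main.v *)
Require Import Defs.
From mathcomp Require Import all_boot all_order all_algebra algC cyclotomic.
From mathcomp Require Import ring lra zify.
Import Order.TTheory GRing.Theory Num.Theory.
Local Open Scope ring_scope.

Lemma Inc {u r : algC} : `|u| = 1 -> `|r| = 1 -> 0 < 'Im r -> 0 <= 'Im u ->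
  'Re u <= 'Re r -> 'Re r < 1 -> 'Re u < 'Re (u * r^*).
Proof.
move=> nu nr hb hy hxa ha1.
rewrite ReM Re_conj Im_conj mulrN opprK.
have hu : 'Re u ^+ 2 + 'Im u ^+ 2 = 1 by rewrite -normC2_Re_Im nu expr1n.
have hr : 'Re r ^+ 2 + 'Im r ^+ 2 = 1 by rewrite -normC2_Re_Im nr expr1n.
move: hu hr hb hy hxa ha1.
have rx := Creal_Re u; have ry := Creal_Im u.
have ra := Creal_Re r; have rb := Creal_Im r.
move: ('Re u) ('Im u) ('Re r) ('Im r) rx ry ra rb => x y a b rx ry ra rb hu hr hb hy hxa ha1.
rewrite -subr_gt0.
case: (real_ltgtP rx (real0 _)) => hx.
- have -> : x * a + y * b - x = x * (a - 1) + y * b by ring.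
  apply: ltr_pwDl; last by rewrite mulr_ge0 // ltW.
  by rewrite nmulr_rgt0 // subr_lt0.
- have hxa2 : x ^+ 2 <= a ^+ 2.
    have ha0 : 0 <= a by apply: le_trans hxa; apply: ltW.
    by rewrite ler_sqr // qualifE /= ?ltW.
  have hby : b <= y.
    rewrite -(ler_sqr (ltW hb) hy).
    have -> : b ^+ 2 = 1 - a ^+ 2 by rewrite -hr; ring.
    have -> : y ^+ 2 = 1 - x ^+ 2 by rewrite -hu; ring.
    exact: lerB (lexx _) hxa2.
  have -> : x * a + y * b - x = (y - b) * b + (1 - a) * (1 + a - x) + (a ^+ 2 + b ^+ 2 - 1) by ring.
  rewrite hr subrr addr0.
  apply: ltr_wpDl; first by rewrite mulr_ge0 ?subr_ge0 // ltW.
  rewrite mulr_gt0 ?subr_gt0 //.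
  by apply: (le_lt_trans hxa); rewrite ltrDr ltr01.
- subst x.
  have hy1 : y = 1.
    have : y ^+ 2 == 1 by rewrite -hu expr0n /= add0r.
    by rewrite sqrp_eq1 // => /eqP.
  by rewrite hy1 mul0r add0r mul1r subr0.
Qed.

Lemma max_nat (f : nat -> algC) (hf : forall j, f j \is Num.real) n :
  exists m, (m <= n)%N /\ forall j, (j <= n)%N -> f j <= f m.
Proof.
elim: n => [|n [m [hm Hm]]].
  by exists 0%N; split => // j; rewrite leqn0 => /eqP ->.
case/orP: (real_leVge (hf m) (hf n.+1)) => le.
  exists n.+1; split => // j; rewrite leq_eqVlt => /orP [/eqP -> //|hj].
  exact: le_trans (Hm j hj) le.
exists m; split; first exact: leqW.
move=> j; rewrite leq_eqVlt => /orP [/eqP -> //|hj].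
exact: Hm.
Qed.

Lemma unit_norm {n : nat} {y : algC} : (0 < n)%N -> y ^+ n = 1 -> `|y| = 1.
Proof.
move=> n0 hy; apply/eqP; rewrite -(pexpr_eq1 n0) ?normr_ge0 //.
by rewrite -normrX hy normr1.
Qed.

Lemma conj_inv {y : algC} : `|y| = 1 -> y * y^* = 1.
Proof. by move=> h; rewrite -normCK h expr1n. Qed.

Lemma Re_le1 {y : algC} : `|y| = 1 -> 'Re y ^+ 2 + 'Im y ^+ 2 = 1.
Proof. by move=> h; rewrite -normC2_Re_Im h expr1n. Qed.

Lemma Crect1 {r : algC} : 'Re r = 1 -> 'Im r = 0 -> r = 1.
Proof. by move=> h1 h2; rewrite [r]Crect h1 h2 mulr0 addr0. Qed.

Lemma gen_max (n : nat) (xi : algC) : (2 < n)%N -> n.-primitive_root xi ->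
  exists r : algC, r ^+ n = 1 /\ 0 <= 'Im r /\
    (forall y : algC, y ^+ n = 1 -> y != 1 -> 'Re y <= 'Re r) /\
    (forall j, r ^+ j = 1 -> (n %| j)%N).
Proof.
move=> n2 hxi.
have n0 : (0 < n)%N by lia.
have xin := prim_expr_order hxi.
have [m [hm Hm]] := max_nat (fun j => 'Re (xi ^+ j.+1)) (fun j => @Creal_Re algC (xi ^+ j.+1)) n.-2.
set r0 := xi ^+ m.+1.
have Hmax0 : forall y, y ^+ n = 1 -> y != 1 -> 'Re y <= 'Re r0.
  move=> y hy ny; case: (prim_rootP hxi hy) => i Ei; rewrite Ei in ny *; clear Ei hy.
  case: i ny => [[|j] hj] /= ny; first by rewrite expr0 eqxx in ny.
  by apply: Hm; lia.
have r0n : r0 ^+ n = 1 by rewrite /r0 -exprM mulnC exprM xin expr1n.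
have r0ne1 : r0 != 1.
  rewrite /r0; apply/negP => /eqP h.
  have := prim_order_dvd hxi m.+1; rewrite h eqxx => /dvdn_leq; lia.
have [r [rn [rne1 [rIm rmax]]]] : exists r : algC, r ^+ n = 1 /\ r != 1 /\ 0 <= 'Im r /\
    forall y : algC, y ^+ n = 1 -> y != 1 -> 'Re y <= 'Re r.
  case/orP: (real_leVge (real0 _) (Creal_Im r0)) => h.
    by exists r0.
  exists r0^*; split; first by rewrite -rmorphXn r0n rmorph1.
  split; first by apply: contra r0ne1 => /eqP h1; rewrite -(conjCK r0) h1 rmorph1.
  split; first by rewrite Im_conj oppr_ge0.
  by move=> y hy ny; rewrite Re_conj; apply: Hmax0.
have nr := unit_norm n0 rn.
have hr2 := Re_le1 nr.
have xine1 : xi != 1.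
  apply/negP => /eqP h.
  have := prim_order_dvd hxi 1; rewrite expr1 h eqxx => /dvdn_leq; lia.
have Hxi := rmax xi xin xine1.
have rImpos : 0 < 'Im r.
  rewrite lt_neqAle rIm andbT; apply/negP => /eqP rI0.
  rewrite -rI0 expr0n /= addr0 in hr2.
  move/eqP: hr2; rewrite sqrf_eq1 => /orP [/eqP hR|/eqP hR].
    by move: rne1; rewrite (Crect1 hR (esym rI0)) eqxx.
  rewrite hR in Hxi.
  have hx2 := Re_le1 (unit_norm n0 xin).
  have hRx : 1 <= 'Re xi ^+ 2.
    rewrite -sqrrN; apply: exprn_ege1; by rewrite -lerNr.
  have hIx : 'Im xi ^+ 2 <= 0.
    by rewrite -(lerD2l ('Re xi ^+ 2)) addr0 hx2.
  have hIx0 : 'Im xi = 0.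
    by apply/eqP; rewrite -sqrf_eq0 eq_le hIx /= real_exprn_even_ge0 ?Creal_Im...
  rewrite hIx0 expr0n /= addr0 in hx2.
  have hRx1 : 'Re xi = -1.
    move/eqP: hx2; rewrite sqrf_eq1 => /orP [/eqP h1|/eqP //].
    move: Hxi; rewrite h1 => h2.
    have := le_trans h2 (lerN10 _); by rewrite ler10.
  have : xi ^+ 2 = 1.
    by rewrite [xi]Crect hRx1 hIx0 mulr0 addr0 sqrrN expr1n.
  move=> h; have := prim_order_dvd hxi 2; rewrite h eqxx => /dvdn_leq; lia.
have rRe1 : 'Re r < 1.
  rewrite real_ltNge ?real1 ?Creal_Re //; apply/negP => h.
  have : 1 <= 'Re r ^+ 2 by apply: exprn_ege1.
  rewrite -hr2 -{2}(addr0 ('Re r ^+ 2)) lerD2l.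
  by rewrite real_leNgt ?real0 ?rpredX ?Creal_Im // exprn_gt0.
have [ms [hms Hms]] := max_nat (fun k => 'Re (xi * r ^+ k)) (fun k => @Creal_Re algC (xi * r ^+ k)) n.-1.
set u := xi * r ^+ ms.
have un : u ^+ n = 1 by rewrite /u exprMn xin mul1r -exprM mulnC exprM rn expr1n.
have nu := unit_norm n0 un.
have Hw : forall k, 'Re (xi * r ^+ k) <= 'Re u.
  move=> k; rewrite -(expr_mod k rn); apply: Hms.
  have := ltn_pmod k n0; lia.
have u1 : u = 1.
  apply/eqP; apply/negPn/negP => hu1.
  have hur := rmax u un hu1.
  have rc : r^* = r ^+ n.-1.
    have := conj_inv nr => h.
    rewrite -[r^*]mulr1 -rn -{1}(prednK n0) exprS mulrA [r^* * r]mulrC h mul1r //.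
  case/orP: (real_leVge (real0 _) (Creal_Im u)) => h.
    have := Inc nu nr rImpos h hur rRe1.
    by rewrite rc /u -mulrA -exprD => /lt_geF; rewrite Hw.
  have h' : 0 <= 'Im u^* by rewrite Im_conj oppr_ge0.
  have := Inc (u := u^*) (r := r); rewrite norm_conjC Re_conj => /(_ nu nr rImpos h' hur rRe1).
  by rewrite -rmorphM Re_conj /u -mulrA -exprSr => /lt_geF; rewrite Hw.
exists r; split => //; split => //; split => // j hj.
rewrite (prim_order_dvd hxi).
have : u ^+ j = 1 by rewrite u1 expr1n.
by rewrite /u exprMn -exprM mulnC exprM hj expr1n mulr1 => ->.
Qed.

Lemma m1ne1 : ((-1 : algC) == 1) = false.
Proof. exact: lt_eqF (lt_trans (ltrN10 _) ltr01). Qed.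

Lemma zeta_ord b : (0 < b)%N ->
  (zeta b) ^+ (2 * b) = -1 /\ forall j, (zeta b) ^+ j = 1 -> ((4 * b) %| j)%N.
Proof.
move=> b0.
have N1 : (1 < 2 * b)%N by lia.
have z2b : zeta b ^+ (2 * b) = -1 by rewrite /zeta rootCK //; lia.
split => //.
case: (@C_prim_root_exists (4 * b) ltac:(lia)) => xi hxi.
have n2 : (2 < 4 * b)%N by lia.
have [r [rn [rIm [rmax rord]]]] := gen_max _ _ n2 hxi.
have rN : r ^+ (2 * b) = -1.
  have e4 : (2 * b * 2 = 4 * b)%N by lia.
  have : (r ^+ (2 * b)) ^+ 2 == 1 by rewrite -exprM e4 rn.
  rewrite sqrf_eq1 => /orP [/eqP h|/eqP //].
  have := rord _ h => /dvdn_leq; lia.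
have h1 : 'Re r <= 'Re (zeta b) by apply: rootC_Re_max => //; lia.
have z4 : zeta b ^+ (4 * b) = 1.
  have -> : (4 * b = 2 * b * 2)%N by lia.
  by rewrite exprM z2b sqrrN expr1n.
have zne1 : zeta b != 1.
  apply/negP => /eqP h; move: z2b; rewrite h expr1n => /eqP; by rewrite eq_sym m1ne1.
have h2 := rmax _ z4 zne1.
have hRe : 'Re (zeta b) = 'Re r by apply/eqP; rewrite eq_le h1 h2.
have hIz : 0 <= 'Im (zeta b) by apply: Im_rootC_ge0.
have nz := Re_le1 (unit_norm (n := (4 * b)%N) ltac:(lia) z4).
have nr := Re_le1 (unit_norm (n := (4 * b)%N) ltac:(lia) rn).
have hIm : 'Im (zeta b) = 'Im r.
  apply/eqP; rewrite -(eqrXn2 (n := 2)) //.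
  by apply/eqP; apply: (addrI ('Re r ^+ 2)); rewrite nr -hRe nz.
have -> : zeta b = r by rewrite [zeta b]Crect [r]Crect hRe hIm.
exact: rord.
Qed.

Lemma sqrt_fact_ne0 (p q : nat) : sqrtC ((p`! * q`!)%N%:R : algC) != 0.
Proof. by rewrite sqrtC_eq0 pnatr_eq0 muln_eq0 negb_or -!lt0n !fact_gt0. Qed.

Lemma Dj_diag n (g : 'M[algC]_2) (k' k : 'I_n.+1) : g 1 0 = 0 -> g 0 1 = 0 ->
  Dj n g k' k = if k' == k then g 0 0 ^+ (n - k) * g 1 1 ^+ k else 0.
Proof.
move=> h10 h01; rewrite /Dj mxE.
rewrite (bigD1 ord_max) //= [X in _ + X]big1 ?addr0; last first.
  move=> u hu; apply: big1 => l _; case: ifP => // _.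
  have hu' : (u < n - k)%N.
    have := ltn_ord u; move: hu; rewrite -val_eqE /= => hu; lia.
  have hz : (n - k - u == 0)%N = false by lia.
  by rewrite h10 expr0n hz /= !(mulr0, mul0r).
rewrite (bigD1 ord0) //= [X in _ + X]big1 ?addr0; last first.
  move=> l hl; case: ifP => // _.
  have hl' : (0 < l)%N by move: hl; rewrite -val_eqE /=; lia.
  have hz : (nat_of_ord l == 0)%N = false by lia.
  by rewrite h01 expr0n hz /= !(mulr0, mul0r).
rewrite subnn subn0 addn0 binn bin0 !expr0 !mulr1 !mul1r.
have [->|hne] := eqVneq k' k.
  by rewrite !eqxx divff ?mul1r ?sqrt_fact_ne0.
have kk : (n - k == n - k')%N = false.
  have := ltn_ord k; have := ltn_ord k'.
  have : (k' : nat) <> k by move=> h; move/eqP: hne; apply; apply: val_inj.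
  lia.
by rewrite kk mulr0.
Qed.

Lemma Dj_anti n (g : 'M[algC]_2) (k' k : 'I_n.+1) : g 0 0 = 0 -> g 1 1 = 0 ->
  Dj n g k' k = if (k' + k == n)%N then g 1 0 ^+ (n - k) * g 0 1 ^+ k else 0.
Proof.
move=> h00 h11; rewrite /Dj mxE.
rewrite (bigD1 ord0) //= [X in _ + X]big1 ?addr0; last first.
  move=> u hu; apply: big1 => l _; case: ifP => // _.
  have hu' : (0 < u)%N by move: hu; rewrite -val_eqE /=; lia.
  have hz : (nat_of_ord u == 0)%N = false by lia.
  by rewrite h00 expr0n hz /= !(mulr0, mul0r).
rewrite (bigD1 ord_max) //= [X in _ + X]big1 ?addr0; last first.
  move=> l hl; case: ifP => // _.
  have hl' : (l < k)%N.
    have := ltn_ord l; move: hl; rewrite -val_eqE /= => hl; lia.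
  have hz : (k - l == 0)%N = false by lia.
  by rewrite h11 expr0n hz /= !(mulr0, mul0r).
rewrite subnn subn0 add0n binn bin0 !expr0 !mulr1 !mul1r.
have := ltn_ord k; have := ltn_ord k' => hk' hk.
case: ifP => hc; last first.
  rewrite mulr0 (_ : (k' + k == n)%N = false) //.
  by apply/negbTE; move/negbT: hc; lia.
rewrite (_ : (k' + k == n)%N = true); last by move/eqP: hc; lia.
have -> : (n - k' = k)%N by move/eqP: hc; lia.
have -> : (k' = n - k :> nat)%N by move/eqP: hc; lia.
by rewrite mulnC divff ?mul1r ?sqrt_fact_ne0.
Qed.

Lemma ord2P (i : 'I_2) : i = 0 \/ i = 1.
Proof.
case: i => [[|[|m]] hi]; [left|right|by []]; exact: val_inj.
Qed.

Lemma Ph_pow b e : Phmx b ^+ e = \matrix_(i < 2, j < 2)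
  (if i == j then (if i == 0 then (zeta b)^-1 ^+ e else zeta b ^+ e) else 0).
Proof.
elim: e => [|e IH].
  apply/matrixP => i j; rewrite !mxE.
  by case: (ord2P i) => ->; case: (ord2P j) => ->.
rewrite exprS IH; apply/matrixP => i j.
rewrite -mulmxE !mxE !big_ord_recl big_ord0 !mxE /=.
by case: (ord2P i) => ->; case: (ord2P j) => -> /=; rewrite ?exprS; simpl; 
  rewrite ?(mulr0, mul0r, addr0, add0r).
Qed.

Lemma mval_rev n (k : 'I_n.+1) : mval (rev_ord k) = - mval k.
Proof.
rewrite /mval; have -> : nat_of_ord (rev_ord k) = (n - k)%N by rewrite /= subSS.
rewrite -subzn ?intrB; last by have := ltn_ord k; lia.
by field.
Qed.

Lemma zeta_prim b : (0 < b)%N -> (4 * b).-primitive_root (zeta b).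
Proof.
move=> b0; have [z2 zo] := zeta_ord _ b0.
have z4 : zeta b ^+ (4 * b) = 1.
  have -> : (4 * b = 2 * b * 2)%N by lia.
  by rewrite exprM z2 sqrrN expr1n.
have [m pm md] := prim_order_exists (ltac:(lia) : (0 < 4 * b)%N) z4.
have : (4 * b %| m)%N by apply: zo; exact: prim_expr_order pm.
move=> h; have -> : (4 * b = m)%N by apply/eqP; rewrite eqn_dvd h md.
exact: pm.
Qed.

Theorem lemma1 (b a n : nat) (hb : (0 < b)%N) (ha : (0 < a)%N) (hab : (a <= b)%N)
  (V : 'M[algC]_(n.+1, 2))
  (hiso : (map_mx (fun z : algC => z^*) V)^T *m V = 1%:M)
  (hcov : forall w : seq gen, Dj n (evalw b w) *m V = V *m delta_w a b w) :
  (forall m : rat, supp (fun k => V k 0) m ->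
     exists z : int, m = ((2 * a)%N%:Q - 1) / 2 + (2 * b)%N%:Q * z%:~R) /\
  (forall m : rat, supp (fun k => V k 1) m <-> supp (fun k => V k 0) (- m)).
Proof.
split.
  move=> m [k [hk <-]].
  have := hcov [:: GPh]; rewrite /evalw /delta_w /= !mulmx1 => /matrixP /(_ k 0).
  rewrite !mxE (bigD1 k) //= [X in _ + X]big1 ?addr0; last first.
    by move=> j hj; rewrite Dj_diag ?mxE // eq_sym (negbTE hj) mul0r.
  rewrite Dj_diag ?mxE // eqxx !big_ord_recl big_ord0 Ph_pow !mxE /=.
  move=> E; rewrite mulr0 !addr0 in E.
  have [z2 _] := zeta_ord _ hb.
  set z := zeta b in E z2.
  have zn0 : z != 0.
    apply/negP => /eqP z0; move: z2; rewrite z0 expr0n.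
    have -> : (2 * b == 0)%N = false by lia.
    move/eqP; by rewrite eq_sym oppr_eq0 oner_eq0.
  rewrite [RHS]mulrC in E; have E2 := mulIf hk E.
  rewrite !exprVn in E2.
  have E3 : z ^+ (k + (2 * a - 1)) = z ^+ (n - k).
    have Ek : z ^+ k = z ^+ (n - k) * (z ^+ (2 * a - 1))^-1.
      by rewrite -E2 mulrA mulfV ?mul1r // expf_neq0.
    by rewrite exprD Ek divfK // expf_neq0.
  move/eqP: E3; rewrite (eq_prim_root_expr (zeta_prim _ hb)) => /eqP hmod.
  have := divn_eq (n - k) (4 * b); have := divn_eq (k + (2 * a - 1)) (4 * b).
  move: ((n - k) %/ (4 * b))%N ((k + (2 * a - 1)) %/ (4 * b))%N hmod => q1 q2 hmod h2 h1.
  exists (q1%:Z - q2%:Z).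
  have EN : (n + 1 + q2 * (4 * b) = 2 * k + 2 * a + q1 * (4 * b))%N.
    have := ltn_ord k; lia.
  have ENQ := congr1 (fun x : nat => (x%:R : rat)) EN; rewrite /= !natrD !natrM in ENQ.
  rewrite /mval intrB -!pmulrn !natrM.
  lra.
have key : forall k : 'I_n.+1, (V (rev_ord k) 1 != 0) = (V k 0 != 0).
  move=> k.
  have := hcov [:: GX]; rewrite /evalw /delta_w /= !mulmx1 => /matrixP /(_ k 1).
  rewrite !mxE (bigD1 (rev_ord k)) //= [X in _ + X]big1 ?addr0; last first.
    move=> j hj; rewrite Dj_anti ?mxE //.
    have -> : (k + j == n)%N = false.
      apply/negbTE; apply: contra hj => /eqP hj; apply/eqP/val_inj => /=.
      have := ltn_ord k; lia.
    by rewrite mul0r.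
  rewrite Dj_anti ?mxE //.
  have -> : (k + rev_ord k == n)%N = true.
    by apply/eqP => /=; have := ltn_ord k; lia.
  rewrite !big_ord_recl big_ord0 !mxE /= mulr0 !addr0 => E.
  have c0 : (- 'i : algC) ^+ (n - rev_ord k) * (- 'i) ^+ rev_ord k != 0.
    by rewrite mulf_neq0 // expf_neq0 // oppr_eq0 neq0Ci.
  apply/idP/idP.
    move=> h; have : (- 'i : algC) ^+ (n - rev_ord k) * (- 'i) ^+ rev_ord k * V (rev_ord k) 1 != 0.
      by rewrite mulf_neq0.
    by rewrite E mulf_eq0 negb_or => /andP [].
  move=> h; have : V k ord0 * - 'i != 0 by rewrite mulf_neq0 // oppr_eq0 neq0Ci.
  by rewrite -E mulf_eq0 negb_or => /andP [].
move=> m; split.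
  move=> [k [hk <-]]; exists (rev_ord k); split; last exact: mval_rev.
  by rewrite -key rev_ordK.
move=> [k [hk hm]]; exists (rev_ord k); split; first by rewrite key.
by rewrite mval_rev hm opprK.
Qed.
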